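(* Assume the setting of the context. Suppose $\gamma\in\mathcal{P}(S^K)$ is such that $\mathcal{M}(\gamma)=\{\nu\in\mathcal{P}(S^K):\gamma=M\nu\}$ is non-empty. Then $\inf\{J(\nu):\nu\in\mathcal{M}(\gamma)\}$ is attained at the symmetric measure \[ \nu_{sym}(\mathbf{x})=\frac{\gamma(\mathbf{x})}{K!\,\rho(\mathbf{x})},\qquad \mathbf{x}\in S^K. \]
   Context: **State space and dynamics.** $S$ is a finite set and $K\ge2$ an integer. For $k=1,\dots,K$, $\Gamma^k$ is an irreducible intensity matrix on $S$. It is reversible with respect to its unique invariant distribution $\mu_k$ (so $\mu_k>0$). Set $\mu=\mu_1\times\cdots\times\mu_K$. **Permutations and weights.** $\Sigma_K$ is the set of permutations of $\{1,\dots,K\}$, and $\mathbf{x}^\sigma=(x_{\sigma^{-1}(1)},\dots,x_{\sigma^{-1}(K)})$. Define $\rho(\mathbf{x})=\mu(\mathbf{x})/\sum_{\sigma'}\mu(\mathbf{x}^{\sigma'})$. **Infinite swapping rates.** - $\Gamma^\infty$ is the rate matrix on $S^K$ with $\Gamma^\infty_{\mathbf{x},\mathbf{y}}=\sum_\sigma\rho(\mathbf{x}^\sigma)\Gamma^{\sigma(i)}_{x_i,y_i}$ when $\mathbf{y}$ differs from $\mathbf{x}$ exactly in coordinate $i$. - Off-diagonal rates between states differing in two or more coordinates are $0$. - $q^\infty(\mathbf{x})=\sum_{\mathbf{y}\ne\mathbf{x}}\Gamma^\infty_{\mathbf{x},\mathbf{y}}$. - $\bar\mu(\mathbf{x})=\frac1{K!}\sum_\sigma\mu(\mathbf{x}^\sigma)$.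 **Map and functional.** - $(M\nu)(\mathbf{x})=\rho(\mathbf{x})\sum_{\sigma}\nu(\mathbf{x}^\sigma)$ for $\nu\in\mathcal{P}(S^K)$. - For $\nu\in\mathcal{P}(S^K)$ with $\theta=\nu/\bar\mu$, \[ J(\nu)=\sum_{\mathbf{x}}q^\infty(\mathbf{x})\theta(\mathbf{x})\bar\mu(\mathbf{x})-\sum_{\mathbf{x}\ne\mathbf{y}}\theta^{1/2}(\mathbf{x})\theta^{1/2}(\mathbf{y})\Gamma^\infty_{\mathbf{x},\mathbf{y}}\bar\mu(\mathbf{x}). \] *)

(* Defs.v *)
From HB Require Import structures.
From mathcomp Require Import all_boot all_order all_algebra all_fingroup.
Set Implicit Arguments. Unset Strict Implicit. Unset Printing Implicit Defensive.
Import Order.TTheory GRing.Theory Num.Theory.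
Local Open Scope ring_scope.

Section InfiniteSwapping.
Variables (R : rcfType) (S : finType) (K : nat).
Variable Gamma : 'I_K -> S -> S -> R.
Variable mu : 'I_K -> S -> R.

Definition config := {ffun 'I_K -> S}.

Definition xperm (s : {perm 'I_K}) (x : config) : config :=
  [ffun i => x (s^-1%g i)].

Definition muprod (x : config) : R := \prod_(i < K) mu i (x i).

Definition rho (x : config) : R :=
  muprod x / \sum_(s : {perm 'I_K}) muprod (xperm s x).

Definition differ_only_at (x y : config) (i : 'I_K) : bool :=
  (x i != y i) && [forall j, (j != i) ==> (x j == y j)].

(* off-diagonal infinite swapping rates (zero unless x, y differ in exactly
   one coordinate; at most one i satisfies differ_only_at) *)
Definition Ginf (x y : config) : R :=
  \sum_(i < K | differ_only_at x y i)
     \sum_(s : {perm 'I_K}) rho (xperm s x) * Gamma (s i) (x i) (y i).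

Definition qinf (x : config) : R := \sum_(y | y != x) Ginf x y.

Definition mubar (x : config) : R :=
  (K`!%:R)^-1 * \sum_(s : {perm 'I_K}) muprod (xperm s x).

Definition Mmap (nu : config -> R) (x : config) : R :=
  rho x * \sum_(s : {perm 'I_K}) nu (xperm s x).

Definition Jfun (nu : config -> R) : R :=
  let theta := fun x => nu x / mubar x in
  \sum_x qinf x * theta x * mubar x
  - \sum_x \sum_(y | y != x)
      Num.sqrt (theta x) * Num.sqrt (theta y) * Ginf x y * mubar x.

Definition nu_sym (gamma : config -> R) (x : config) : R :=
  gamma x / (K`!%:R * rho x).

End InfiniteSwapping.

Definition is_prob (R : numDomainType) (T : finType) (p : T -> R) : Prop :=
  (forall t, 0 <= p t) /\ \sum_t p t = 1.

Definition is_intensity (R : numDomainType) (S : finType) (G : S -> S -> R) : Prop :=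
  (forall a b, a != b -> 0 <= G a b) /\ (forall a, \sum_b G a b = 0).

Definition irreducible_gen (R : numDomainType) (S : finType) (G : S -> S -> R) : Prop :=
  forall a b, connect [rel u v | (u != v) && (0 < G u v)] a b.

Definition is_invariant (R : numDomainType) (S : finType) (G : S -> S -> R) (m : S -> R) : Prop :=
  is_prob m /\ forall b, \sum_a m a * G a b = 0.

Definition reversible (R : numDomainType) (S : finType) (G : S -> S -> R) (m : S -> R) : Prop :=
  forall a b, m a * G a b = m b * G b a.

(* Main.v *)
Require Import Defs.
From HB Require Import structures.
From mathcomp Require Import all_boot all_order all_algebra all_fingroup.
From mathcomp Require Import ring lra.
Import Order.TTheory GRing.Theory Num.Theory.
Local Open Scope ring_scope.

Lemma cauchy_schwarz (R : rcfType) (I : finType) (u v : I -> R) :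
  \sum_i u i * v i <= Num.sqrt (\sum_i u i ^+ 2) * Num.sqrt (\sum_i v i ^+ 2).
Proof.
set A := \sum_i u i ^+ 2; set B := \sum_i v i ^+ 2; set C := \sum_i u i * v i.
have key : 0 <= \sum_i \sum_j (u i * v j - u j * v i) ^+ 2.
  by apply: sumr_ge0 => i _; apply: sumr_ge0 => j _; apply: sqr_ge0.
have E : \sum_i \sum_j (u i * v j - u j * v i) ^+ 2 = 2 * (A * B) - 2 * C ^+ 2.
  have h1 : forall i j, (u i * v j - u j * v i) ^+ 2 =
     u i ^+ 2 * v j ^+ 2 + v i ^+ 2 * u j ^+ 2 - 2 * ((u i * v i) * (u j * v j)).
    by move=> i j; ring.
  under eq_bigr do under eq_bigr do rewrite h1.
  rewrite (eq_bigr (fun i => u i ^+ 2 * B + v i ^+ 2 * A - 2 * ((u i * v i) * C))).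
    rewrite sumrB big_split /= -!mulr_suml -mulr_sumr -mulr_suml.
    rewrite /C expr2 -/C -/A -/B; ring.
  move=> i _; rewrite sumrB big_split /= /A /B /C !mulr_sumr; congr (_ + _ - _).
have hC : C ^+ 2 <= A * B by lra.
have hA : 0 <= A by apply: sumr_ge0 => i _; apply: sqr_ge0.
have hB : 0 <= B by apply: sumr_ge0 => i _; apply: sqr_ge0.
rewrite -sqrtrM //; apply: le_trans (ler_norm C) _.
by rewrite -sqrtr_sqr ler_wsqrtr.
Qed.

Section Aux.
Variables (R : rcfType) (S : finType) (K : nat).
Variable Gamma : 'I_K -> S -> S -> R.
Variable mu : 'I_K -> S -> R.
Hypothesis mu_pos : forall k a, 0 < mu k a.

Local Notation config := (config S K).
Local Notation xperm := (@xperm S K).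

Lemma xpermM (s t : {perm 'I_K}) x : xperm s (xperm t x) = xperm (t * s)%g x.
Proof. by apply/ffunP => i; rewrite !ffunE invMg permM. Qed.

Lemma xperm1 x : xperm 1%g x = x.
Proof. by apply/ffunP => i; rewrite !ffunE invg1 perm1. Qed.

Lemma xpermK s : cancel (xperm s) (xperm s^-1%g).
Proof. by move=> x; rewrite xpermM mulgV xperm1. Qed.

Lemma xperm_inj s : injective (xperm s).
Proof. exact: can_inj (xpermK s). Qed.

Lemma sum_xperm s (F : config -> R) : \sum_x F (xperm s x) = \sum_x F x.
Proof. exact: esym (reindex_inj (xperm_inj s)). Qed.

Lemma sum_permL t (F : {perm 'I_K} -> R) : \sum_s F (t * s)%g = \sum_s F s.
Proof. exact: esym (reindex_inj (mulgI t)). Qed.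

Definition Dsum x := \sum_(s : {perm 'I_K}) muprod mu (xperm s x).

Lemma muprod_pos x : 0 < muprod mu x.
Proof. by apply: prodr_gt0 => i _; apply: mu_pos. Qed.

Lemma Dsum_pos x : 0 < Dsum x.
Proof.
rewrite /Dsum (bigD1 1%g) //= xperm1; apply: ltr_pwDl; first exact: muprod_pos.
by apply: sumr_ge0 => s _; apply/ltW/muprod_pos.
Qed.

Lemma Dsum_perm t x : Dsum (xperm t x) = Dsum x.
Proof.
rewrite /Dsum; under eq_bigr do rewrite xpermM.
exact: sum_permL (fun s => muprod mu (xperm s x)).
Qed.

Lemma rho_pos x : 0 < rho mu x.
Proof. by rewrite /rho divr_gt0 // ?muprod_pos // Dsum_pos. Qed.

Lemma Kfact_pos : 0 < (K`!)%:R :> R.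
Proof. by rewrite ltr0n fact_gt0. Qed.

Lemma mubar_pos x : 0 < mubar mu x.
Proof. by rewrite /mubar mulr_gt0 ?invr_gt0 ?Kfact_pos // Dsum_pos. Qed.

Lemma mubar_perm t x : mubar mu (xperm t x) = mubar mu x.
Proof. by rewrite /mubar -/(Dsum _) Dsum_perm. Qed.

Lemma sum_rho x : \sum_s rho mu (xperm s x) = 1.
Proof.
rewrite /rho; under eq_bigr do rewrite -/(Dsum _) Dsum_perm.
by rewrite -mulr_suml divff // gt_eqF // Dsum_pos.
Qed.


Lemma differ_perm t x y i :
  differ_only_at (xperm t x) (xperm t y) i = differ_only_at x y (t^-1%g i).
Proof.
rewrite /differ_only_at !ffunE; congr (_ && _).
apply/forallP/forallP => H j.
  apply/implyP => hj; have := H (t j); rewrite !ffunE permK => /implyP; apply.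
  by apply: contra hj => /eqP <-; rewrite permK.
apply/implyP => hj; have := H (t^-1%g j); rewrite !ffunE => /implyP; apply.
by apply: contra hj => /eqP /perm_inj ->.
Qed.

Lemma Ginf_perm t x y :
  Ginf Gamma mu (xperm t x) (xperm t y) = Ginf Gamma mu x y.
Proof.
rewrite /Ginf (reindex_inj (@perm_inj _ t)) /=.
apply: eq_big => [j|j _]; first by rewrite differ_perm permK.
rewrite !ffunE permK.
under eq_bigr do rewrite xpermM -permM.
exact: (sum_permL t (fun s => rho mu (xperm s x) * Gamma (s j) (x j) (y j))).
Qed.

Lemma qinf_perm t x : qinf Gamma mu (xperm t x) = qinf Gamma mu x.
Proof.
rewrite /qinf (reindex_inj (xperm_inj t)) /=.
apply: eq_big => [y|y _]; last by rewrite Ginf_perm.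
by rewrite (inj_eq (@xperm_inj t)).
Qed.


Lemma Ginf_ge0 : (forall k a b, a != b -> 0 <= Gamma k a b) ->
  forall x y, 0 <= Ginf Gamma mu x y.
Proof.
move=> HG x y; apply: sumr_ge0 => i /andP [hi _]; apply: sumr_ge0 => s _.
by rewrite mulr_ge0 ?HG // ltW // rho_pos.
Qed.

Definition Jt (th : config -> R) : R :=
  \sum_x qinf Gamma mu x * th x * mubar mu x
  - \sum_x \sum_(y | y != x)
      Num.sqrt (th x) * Num.sqrt (th y) * Ginf Gamma mu x y * mubar mu x.

Lemma JfunE nu : Jfun Gamma mu nu = Jt (fun x => nu x / mubar mu x).
Proof. by []. Qed.

Lemma sum2_perm t (F : config -> config -> R) :
  \sum_x \sum_(y | y != x) F (xperm t x) (xperm t y)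
  = \sum_x \sum_(y | y != x) F x y.
Proof.
rewrite -(sum_xperm t (fun x => \sum_(y | y != x) F x y)).
apply: eq_bigr => x _; rewrite [RHS](reindex_inj (xperm_inj t)) /=.
by apply: eq_bigl => y; rewrite (inj_eq (@xperm_inj t)).
Qed.

Lemma Jt_perm t th : Jt (fun x => th (xperm t x)) = Jt th.
Proof.
rewrite /Jt; congr (_ - _).
  rewrite -(sum_xperm t (fun x => qinf Gamma mu x * th x * mubar mu x)).
  by apply: eq_bigr => x _; rewrite qinf_perm mubar_perm.
rewrite -(sum2_perm t (fun x y => Num.sqrt (th x) * Num.sqrt (th y) * Ginf Gamma mu x y * mubar mu x)).
by apply: eq_bigr => x _; apply: eq_bigr => y _; rewrite Ginf_perm mubar_perm.
Qed.


Lemma Jt_jensen (c : R) (F : {perm 'I_K} -> config -> R) :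
  (forall k a b, a != b -> 0 <= Gamma k a b) ->
  0 <= c -> (forall s x, 0 <= F s x) ->
  Jt (fun x => c * \sum_s F s x) <= c * \sum_s Jt (F s).
Proof.
move=> HG hc hF; rewrite /Jt sumrB mulrBr.
have -> : c * \sum_s \sum_x qinf Gamma mu x * F s x * mubar mu x =
   \sum_x qinf Gamma mu x * (c * \sum_s F s x) * mubar mu x.
  rewrite exchange_big /= mulr_sumr; apply: eq_bigr => x _.
  rewrite -mulr_suml -mulr_sumr; ring.
rewrite lerD2l lerN2 [X in X <= _]mulr_sumr.
under [X in X <= _]eq_bigr do rewrite mulr_sumr.
rewrite exchange_big /=; apply: ler_sum => x _.
under [X in X <= _]eq_bigr do rewrite mulr_sumr.
rewrite exchange_big /=; apply: ler_sum => y _.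
rewrite -mulr_sumr.
set Gm := Ginf Gamma mu x y; set mm := mubar mu x.
have -> : \sum_i Num.sqrt (F i x) * Num.sqrt (F i y) * Gm * mm =
   (\sum_i Num.sqrt (F i x) * Num.sqrt (F i y)) * (Gm * mm).
  by rewrite mulr_suml; apply: eq_bigr => i _; rewrite -mulrA.
rewrite (mulrA c) -(mulrA (_ * _) Gm mm); apply: ler_wpM2r.
  by apply: mulr_ge0; [apply: Ginf_ge0 | apply/ltW/mubar_pos].
have hS : forall z, 0 <= \sum_s F s z by move=> z; apply: sumr_ge0.
rewrite !sqrtrM // mulrACA -expr2 sqr_sqrtr //; apply: ler_wpM2l => //.
have := @cauchy_schwarz _ _ (fun s => Num.sqrt (F s x)) (fun s => Num.sqrt (F s y)).
have e : forall z, \sum_s Num.sqrt (F s z) ^+ 2 = \sum_s F s z.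
  by move=> z; apply: eq_bigr => s _; rewrite sqr_sqrtr.
by rewrite !e.
Qed.


Lemma Jt_ext f g : f =1 g -> Jt f = Jt g.
Proof.
move=> E; rewrite /Jt; congr (_ - _); apply: eq_bigr => x _; first by rewrite E.
by apply: eq_bigr => y _; rewrite !E.
Qed.

Lemma sum_perm_const (a : R) : \sum_(s : {perm 'I_K}) a = a * (K`!)%:R.
Proof. by rewrite sumr_const card_Sn mulr_natr. Qed.

Lemma nu_sym_avg gamma nu : gamma =1 Mmap mu nu ->
  forall x, nu_sym mu gamma x = (K`!%:R)^-1 * \sum_s nu (xperm s x).
Proof.
move=> E x; rewrite /nu_sym E /Mmap.
have h1 := rho_pos x; have h2 := Kfact_pos.
field; apply/andP; split; exact: lt0r_neq0.
Qed.

End Aux.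

Theorem proposition3p2 (R : rcfType) (S : finType) (K : nat)
  (Gamma : 'I_K -> S -> S -> R) (mu : 'I_K -> S -> R) :
  (2 <= K)%N ->
  (forall k, is_intensity (Gamma k)) ->
  (forall k, irreducible_gen (Gamma k)) ->
  (forall k, is_invariant (Gamma k) (mu k)) ->
  (forall k m, is_invariant (Gamma k) m -> m =1 mu k) ->
  (forall k, reversible (Gamma k) (mu k)) ->
  (forall k a, 0 < mu k a) ->
  forall gamma : config S K -> R,
  is_prob gamma ->
  (exists nu : config S K -> R, is_prob nu /\ gamma =1 Mmap mu nu) ->
  [/\ is_prob (nu_sym mu gamma),
      gamma =1 Mmap mu (nu_sym mu gamma) &
      forall nu : config S K -> R, is_prob nu -> gamma =1 Mmap mu nu ->
        Jfun Gamma mu (nu_sym mu gamma) <= Jfun Gamma mu nu].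
Proof.
move=> _ Hint _ _ _ _ mu_pos gamma _ [nu0 [[nu0_ge0 nu0_sum] E0]].
have HG : forall k a b, a != b -> 0 <= Gamma k a b.
  by move=> k a b; case: (Hint k) => H _; apply: H.
have cpos : 0 < (K`!%:R : R)^-1 by rewrite invr_gt0 (Kfact_pos R K).
have cK : (K`!%:R : R)^-1 * K`!%:R = 1 by rewrite mulVf // gt_eqF // (Kfact_pos R K).
have avg0 := @nu_sym_avg R S K mu mu_pos _ _ E0.
have symP : forall s x, nu_sym mu gamma (xperm s x) = nu_sym mu gamma x.
  move=> s x; rewrite !avg0; congr (_ * _).
  under eq_bigr do rewrite xpermM.
  exact: (sum_permL R K s (fun t => nu0 (xperm t x))).
split.
- split.
    by move=> x; rewrite avg0 mulr_ge0 ?(ltW cpos) // sumr_ge0.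
  under eq_bigr do rewrite avg0.
  rewrite -mulr_sumr exchange_big /=.
  under eq_bigr => s _ do rewrite (sum_xperm R S K s nu0) nu0_sum.
  by rewrite sum_perm_const mul1r.
- move=> x; rewrite E0 /Mmap; congr (_ * _).
  under [RHS]eq_bigr do rewrite symP.
  by rewrite sum_perm_const avg0 mulrAC cK mul1r.
- move=> nu [nu_ge0 _] E.
  have avg := @nu_sym_avg R S K mu mu_pos _ _ E.
  set th := fun x => nu x / mubar mu x.
  have th_ge0 : forall x, 0 <= th x.
    by move=> x; rewrite /th divr_ge0 // ltW // (mubar_pos _ _ _ _ mu_pos).
  rewrite !JfunE.
  rewrite (@Jt_ext R S K Gamma mu _ (fun x => (K`!%:R)^-1 * \sum_s th (xperm s x))); last first.
    move=> x; rewrite avg /th -mulrA mulr_suml; congr (_ * _).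
    by apply: eq_bigr => s _; rewrite mubar_perm.
  apply: le_trans (@Jt_jensen R S K Gamma mu mu_pos _ (fun s x => th (xperm s x)) HG (ltW cpos) _) _.
    by move=> s x; apply: th_ge0.
  under eq_bigr do rewrite Jt_perm.
  by rewrite sum_perm_const mulrCA cK mulr1.
Qed.
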